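(* Let $Q$ be a $\Sigma$-uniformized query with hypergraph $\mathcal{H}=(V,E)$, input size $n$, $p$ machines, let $\Delta>0$, and let $\psi$ be the vector returned by Construct$(Q,\Delta)$. Then for every $R\in Q$ with $\mathrm{vars}(R)\setminus H[\mathbf{V}(\psi)/\Delta]\neq\emptyset$, there exists a relation $R'\in Q$ such that (i) $\mathrm{vars}(R)\setminus H[\mathbf{V}(\psi)/\Delta]\subseteq\mathrm{vars}(R')$ and (ii) $\sum_{x\in\mathrm{vars}(R')}\mathbf{V}_x(\psi)\ge 1$.
   Context: A natural join query $Q$ is a set of relations (distinct schemas) with hypergraph $\mathcal{H}=(V,E)$, $V=\bigcup_R\mathrm{vars}(R)$, $E=\{\mathrm{vars}(R)\}$. $\mathcal{H}[S]$ has vertex set $S$ and edges $\{S\cap e: e\in E, S\cap e\ne\emptyset\}$; $\mathsf{red}$ removes every edge strictly contained in another; $\tau^*$ is the minimum fractional vertex cover value. $\deg_R(Y\mid X)=\max_{\mathbf{x}}|\pi_Y\sigma_{X=\mathbf{x}}R|$. A constraint set for $R$ is $\sigma_R:\mathcal{P}(\mathrm{vars}(R))\to\mathbb{R}_{\ge0}$; $R$ satisfies it if $\deg_R(Y\mid X)\le2\sigma_R(X)/\sigma_R(Y)$ for all $X\subseteq Y\subseteq\mathrm{vars}(R)$; $Q$ is $\Sigma$-uniformized ($\Sigma=\{\sigma_R\}_{R\in Q}$) if each $R$ satisfies $\sigma_R$. A vertex weight mapping is $\mathbf{v}:V\to\mathbb{R}_{\ge0}$. For $R\in Q$ and $U\subseteq\mathrm{vars}(R)$: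 $U$ is heavy in $R$ if $\sigma_R(U)\ge n/p^{\sum_{i\in U}v_i}$, consistent if $\sigma_R(U)\le n/p^{\sum_{i\in U}v_i}$. $\mathbf{v}$ is consistent with $Q$ if every $U\subseteq\mathrm{vars}(R)$ is consistent in $R$ for every $R\in Q$. $H[\mathbf{v}]$ is the union of all sets $U$ heavy in some $R\in Q$. For each $U\subseteq V$ fix a minimum fractional vertex cover $\mathbf{v}^*_U$ of $\mathsf{red}(\mathcal{H}[U])$ (zero outside $U$). For $\psi=(\psi_U)_{U\in\mathcal{P}(V)}$, $\mathbf{V}(\psi)=\sum_U\psi_U\mathbf{v}^*_U$ and $|\psi|_1=\sum_U\psi_U$. Construct$(Q,\Delta)$: set $\psi\gets\mathbf{0}$; while $|\psi|_1<1$ and $H[\mathbf{V}(\psi)/\Delta]\ne V$: let $L=V\setminus H[\mathbf{V}(\psi)/\Delta]$ and set $\psi_L$ to the largest $\delta\in(0,1-|\psi|_1]$ such that $Q$ is consistent with $(\mathbf{V}(\psi)+\delta\mathbf{v}^*_L)/\Delta$; return $\psi$. *)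

(* Defs.v *)
From HB Require Import structures.
From mathcomp Require Import all_boot all_order all_algebra.
From mathcomp Require Import reals exp.
Set Implicit Arguments. Unset Strict Implicit. Unset Printing Implicit Defensive.
Import Order.TTheory GRing.Theory Num.Theory.
Local Open Scope ring_scope.

(* Hypergraph part.  Vertices (attributes) form a finite type V; the query  *)
(* is given by its set of schemas E : {set {set V}} (schemas are distinct,  *)
(* so a relation is identified with its schema).                            *)

Definition induced_edges (V : finType) (E : {set {set V}}) (S : {set V})
  : {set {set V}} :=
  [set S :&: e | e in [set e in E | S :&: e != set0]].

Definition red (V : finType) (F : {set {set V}}) : {set {set V}} :=
  [set f in F | ~~ [exists g in F, f \proper g]].

Definition is_fvc (R : realType) (V : finType) (F : {set {set V}}) (w : V -> R)
  : Prop :=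
  (forall x, 0 <= w x) /\ (forall f, f \in F -> 1 <= \sum_(x in f) w x).

Definition is_min_fvc_red (R : realType) (V : finType) (E : {set {set V}})
  (U : {set V}) (w : V -> R) : Prop :=
  [/\ is_fvc (red (induced_edges E U)) w,
      (forall x, x \notin U -> w x = 0) &
      (forall w' : V -> R, is_fvc (red (induced_edges E U)) w' ->
         \sum_(x in U) w x <= \sum_(x in U) w' x)].

(* Relations and degrees.  A tuple of a relation with schema e is a        *)
(* function V -> option D which is Some exactly on e.                       *)

Definition proj (V : finType) (D : finType) (Y : {set V})
  (t : {ffun V -> option D}) : {ffun V -> option D} :=
  [ffun x => if x \in Y then t x else None].

Definition well_typed (V D : finType) (e : {set V})
  (rel : {set {ffun V -> option D}}) : Prop :=
  forall t, t \in rel -> forall x, (t x != None) = (x \in e).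

Definition deg (V D : finType) (rel : {set {ffun V -> option D}})
  (Y X : {set V}) : nat :=
  \max_(s : {ffun V -> option D})
     #|[set proj Y t | t in [set t in rel | proj X t == s]]|.

(* R satisfies the constraint set sigma_R: deg_R(Y|X) <= 2 sigma(X)/sigma(Y),
   written multiplicatively. *)
Definition satisfies (R : realType) (V D : finType) (e : {set V})
  (rel : {set {ffun V -> option D}}) (sig : {set V} -> R) : Prop :=
  forall X Y : {set V}, X \subset Y -> Y \subset e ->
    (deg rel Y X)%:R * sig Y <= 2 * sig X.

(* sigma e U is sigma_R(U) for the relation R with schema e.                *)

Definition thr (R : realType) (V : finType) (n p : nat) (v : V -> R)
  (U : {set V}) : R :=
  n%:R / powR p%:R (\sum_(i in U) v i).

Definition heavy (R : realType) (V : finType) (n p : nat)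
  (sigma : {set V} -> {set V} -> R) (e U : {set V}) (v : V -> R) : bool :=
  thr n p v U <= sigma e U.

Definition consistent_set (R : realType) (V : finType) (n p : nat)
  (sigma : {set V} -> {set V} -> R) (e U : {set V}) (v : V -> R) : bool :=
  sigma e U <= thr n p v U.

Definition consistent_with (R : realType) (V : finType) (E : {set {set V}})
  (n p : nat) (sigma : {set V} -> {set V} -> R) (v : V -> R) : Prop :=
  forall e, e \in E -> forall U : {set V}, U \subset e ->
    consistent_set n p sigma e U v.

Definition Hv (R : realType) (V : finType) (E : {set {set V}}) (n p : nat)
  (sigma : {set V} -> {set V} -> R) (v : V -> R) : {set V} :=
  \bigcup_(e in E) \bigcup_(U : {set V} | (U \subset e) && heavy n p sigma e U v) U.

Definition Vpsi (R : realType) (V : finType) (vstar : {set V} -> V -> R)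
  (psi : {set V} -> R) : V -> R :=
  fun x => \sum_(U : {set V}) psi U * vstar U x.

Definition norm1 (R : realType) (V : finType) (psi : {set V} -> R) : R :=
  \sum_(U : {set V}) psi U.

Definition scale_div (R : realType) (V : finType) (v : V -> R) (Delta : R)
  : V -> R := fun x => v x / Delta.

Definition loop_cond (R : realType) (V : finType) (E : {set {set V}})
  (n p : nat) (sigma : {set V} -> {set V} -> R) (Delta : R)
  (vstar : {set V} -> V -> R) (psi : {set V} -> R) : Prop :=
  norm1 psi < 1 /\ Hv E n p sigma (scale_div (Vpsi vstar psi) Delta) != setT.

Definition construct_step (R : realType) (V : finType) (E : {set {set V}})
  (n p : nat) (sigma : {set V} -> {set V} -> R) (Delta : R)
  (vstar : {set V} -> V -> R) (psi psi' : {set V} -> R) : Prop :=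
  let L := ~: Hv E n p sigma (scale_div (Vpsi vstar psi) Delta) in
  let ok (d : R) :=
    [/\ 0 < d, d <= 1 - norm1 psi &
        consistent_with E n p sigma
          (scale_div (fun x => Vpsi vstar psi x + d * vstar L x) Delta)] in
  exists d : R, ok d /\ (forall d', ok d' -> d' <= d) /\
    psi' = (fun U => if U == L then d else psi U).

Inductive construct_reach (R : realType) (V : finType) (E : {set {set V}})
  (n p : nat) (sigma : {set V} -> {set V} -> R) (Delta : R)
  (vstar : {set V} -> V -> R) : ({set V} -> R) -> Prop :=
| CR0 : construct_reach E n p sigma Delta vstar (fun _ => 0)
| CRS psi psi' :
    construct_reach E n p sigma Delta vstar psi ->
    loop_cond E n p sigma Delta vstar psi ->
    construct_step E n p sigma Delta vstar psi psi' ->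
    construct_reach E n p sigma Delta vstar psi'.

Definition construct_returns (R : realType) (V : finType) (E : {set {set V}})
  (n p : nat) (sigma : {set V} -> {set V} -> R) (Delta : R)
  (vstar : {set V} -> V -> R) (psi : {set V} -> R) : Prop :=
  construct_reach E n p sigma Delta vstar psi /\
  ~ loop_cond E n p sigma Delta vstar psi.

(* Main.v *)
Require Import Defs.
From HB Require Import structures.
From mathcomp Require Import all_boot all_order all_algebra.
From mathcomp Require Import reals exp.
From mathcomp Require Import lra.
Import Order.TTheory GRing.Theory Num.Theory.
Local Open Scope ring_scope.
Lemma thr_anti (R : realType) (V : finType) (n p : nat) (v v' : V -> R) U :
  (0 < p)%N -> (forall x, v x <= v' x) -> thr n p v' U <= thr n p v U.
Proof.
move=> p0 vv; rewrite /thr; apply: ler_wpM2l => //.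
have p1 : (1 : R) <= p%:R by rewrite ler1n.
have h0 : 0 < p%:R `^ (\sum_(i in U) v i) by apply: powR_gt0; rewrite ltr0n.
have h1 : 0 < p%:R `^ (\sum_(i in U) v' i) by apply: powR_gt0; rewrite ltr0n.
rewrite lef_pV2 ?posrE //; apply: ler_powR => //.
by apply: ler_sum => i _.
Qed.

Lemma Hv_mono (R : realType) (V : finType) (E : {set {set V}}) (n p : nat)
  (sigma : {set V} -> {set V} -> R) (v v' : V -> R) :
  (0 < p)%N -> (forall x, v x <= v' x) ->
  Hv E n p sigma v \subset Hv E n p sigma v'.
Proof.
move=> p0 vv; apply/subsetP => x /bigcupP [e eE /bigcupP [U /andP [Ue hU] xU]].
apply/bigcupP; exists e => //; apply/bigcupP; exists U => //.
rewrite Ue /=; rewrite /heavy in hU *.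
apply: le_trans hU; exact: thr_anti.
Qed.
Lemma red_intro (V : finType) (E : {set {set V}}) (U h S : {set V}) :
  h \in E -> S != set0 -> S \subset U :&: h ->
  (forall k, k \in E -> ~~ (U :&: h \proper U :&: k)) ->
  U :&: h \in red (induced_edges E U).
Proof.
move=> hE S0 SUh hmax; rewrite inE; apply/andP; split.
  apply/imsetP; exists h => //; rewrite inE hE /=.
  apply/negP => /eqP e0; move: SUh; rewrite e0 subset0 => /eqP S00.
  by rewrite S00 eqxx in S0.
apply/negP => /existsP [f /andP [/imsetP [k]]]; rewrite inE => /andP [kE _] -> pr.
by move: (hmax k kE); rewrite pr.
Qed.

Lemma red_max (V : finType) (E : {set {set V}}) (U f k : {set V}) :
  f \in red (induced_edges E U) -> k \in E -> ~~ (f \proper U :&: k).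
Proof.
rewrite inE => /andP [_ /existsPn nex] kE; apply/negP => pr.
move: (nex (U :&: k)); rewrite pr andbT; apply/negP/negPn.
apply/imsetP; exists k => //; rewrite inE kE /=.
apply/negP => /eqP e0; move: pr; rewrite e0 => /proper_card; by rewrite cards0.
Qed.

Arguments red_intro {V E U h S}.
Arguments red_max {V E U f k}.

Lemma chain_pick (V : finType) (E : {set {set V}}) (S g0 : {set V}) :
  S != set0 -> g0 \in E -> S \subset g0 ->
  forall k (C : {set {set V}}), #|C| = k ->
  (forall U W, U \in C -> W \in C -> (U \subset W) || (W \subset U)) ->
  (forall U, U \in C -> S \subset U) ->
  exists2 g, g \in E & S \subset g /\
     (forall U, U \in C -> U :&: g \in red (induced_edges E U)).
Proof.
move=> S0 g0E Sg0; elim=> [|k IH] C cC chC SC.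
  exists g0 => //; split => // U UC.
  by move: cC => /eqP; rewrite cards_eq0 => /eqP C0; rewrite C0 inE in UC.
have [M0 M0C] : exists M0, M0 \in C.
  by apply/set0Pn; rewrite -card_gt0 cC.
pose M := fintype.arg_max M0 (fun U => U \in C) (fun U => #|U|).
have [MC Mmax] : M \in C /\ forall U, U \in C -> U \subset M.
  rewrite /M; case: (arg_maxnP (fun U : {set V} => #|U|) M0C) => M1 M1C M1max.
  split => // U UC; case/orP: (chC U M1 UC M1C) => // M1U.
  have := M1max U UC => cU.
  have : M1 == U by rewrite eqEcard M1U; exact: cU.
  by move/eqP <-.
pose C' := C :\ M.
have [g1 g1E [Sg1 g1red]] : exists2 g, g \in E & S \subset g /\
     (forall U, U \in C' -> U :&: g \in red (induced_edges E U)).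
  apply: IH.
  - by move: cC; rewrite (cardsD1 M) MC add1n => -[].
  - by move=> U W; rewrite !inE => /andP [_ UC] /andP [_ WC]; apply: chC.
  - by move=> U; rewrite !inE => /andP [_ UC]; apply: SC.
pose P := fun h : {set V} => [&& h \in E, S \subset h &
   [forall U in C', (U :&: g1) \subset (U :&: h)]].
have Pg1 : P g1 by rewrite /P g1E Sg1 /=; apply/forall_inP => U _.
case: (arg_maxnP (fun h : {set V} => #|M :&: h|) Pg1) => h.
rewrite {1}/P => /and3P [hE Sh /forall_inP hC'] hmax.
exists h => //; split => // U UC.
have SU := SC U UC.
have SUh : S \subset U :&: h by rewrite subsetI SU Sh.
case: (boolP (U == M)) => [/eqP UM | UM].
  apply: (red_intro hE S0 SUh) => k0 k0E; apply/negP => pr.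
  have Pk : P k0.
    rewrite /P k0E /=.
    have hk : U :&: h \subset U :&: k0 by move/proper_sub: pr.
    apply/andP; split.
      apply: subset_trans SUh _; apply: subset_trans hk _; exact: subsetIr.
    apply/forall_inP => W WC'.
    have WM : W \subset M by apply: Mmax; move: WC'; rewrite inE => /andP [].
    apply: subset_trans (hC' W WC') _.
    apply/subsetP => x; rewrite !inE => /andP [xW xh].
    have : x \in U :&: k0.
      by apply: (subsetP hk); rewrite inE xh andbT UM (subsetP WM).
    by rewrite inE xW => /andP [].
  have := hmax k0 Pk; rewrite -UM => /=.
  by move/proper_card: pr; rewrite ltnNge => /negP.
have UC' : U \in C' by rewrite !inE UM UC.
apply: (red_intro hE S0 SUh) => k0 k0E; apply/negP => pr.
have := red_max (g1red U UC') k0E.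
by rewrite (sub_proper_trans (hC' U UC') pr).
Qed.

Section Inv.
Variables (R : realType) (V : finType) (E : {set {set V}})
  (sigma : {set V} -> {set V} -> R) (n p : nat) (Delta : R)
  (vstar : {set V} -> V -> R).
Hypothesis p0 : (0 < p)%N.
Hypothesis D0 : 0 < Delta.
Hypothesis vs0 : forall U x, 0 <= vstar U x.

Let Hps (psi : {set V} -> R) := Hv E n p sigma (scale_div (Vpsi vstar psi) Delta).

Definition okd (psi : {set V} -> R) (d : R) :=
  [/\ 0 < d, d <= 1 - norm1 psi &
        consistent_with E n p sigma
          (scale_div (fun x => Vpsi vstar psi x + d * vstar (~: Hps psi) x) Delta)].

Definition Inv (psi : {set V} -> R) :=
  [/\ forall U, 0 <= psi U,
      forall U W, psi U != 0 -> psi W != 0 -> (U \subset W) || (W \subset U),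
      forall U, psi U != 0 -> ~: Hps psi \subset U &
      forall d, okd psi d -> psi (~: Hps psi) = 0].

Lemma Inv_reach psi : construct_reach E n p sigma Delta vstar psi -> Inv psi.
Proof.
elim=> [|ps ps2 _ [I0 I1 I2 I3] _ step].
  by split => // U; rewrite eqxx.
move: step; rewrite /construct_step.
set L := ~: Hv _ _ _ _ _.
move=> [d0 [[d0p d0le d0c] [dmax ->]]].
have okd0 : okd ps d0 by [].
have psL : ps L = 0 := I3 d0 okd0.
have Vps' : forall x, Vpsi vstar (fun U => if U == L then d0 else ps U) x
     = Vpsi vstar ps x + d0 * vstar L x.
  move=> x; rewrite /Vpsi (bigD1 L) // [in RHS](bigD1 L) //= eqxx psL mul0r add0r addrC.
  congr (_ + _); apply: eq_bigr => U /negbTE ->; by [].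
have N' : norm1 (fun U => if U == L then d0 else ps U) = norm1 ps + d0.
  rewrite /norm1 (bigD1 L) // [in RHS](bigD1 L) //= eqxx psL add0r addrC.
  congr (_ + _); apply: eq_bigr => U /negbTE ->; by [].
have HH : Hps ps \subset Hps (fun U => if U == L then d0 else ps U).
  apply: Hv_mono => // x; rewrite /scale_div Vps'.
  apply: ler_wpM2r; first by rewrite invr_ge0 ltW.
  by rewrite lerDl mulr_ge0 // ltW.
set ps' := (fun U => if U == L then d0 else ps U) in Vps' N' HH *.
have L'L : ~: Hps ps' \subset L by rewrite setCS.
split.
- by move=> U; rewrite /ps'; case: (U == L) => //; rewrite ltW.
- move=> U W; rewrite /ps'.
  case: (boolP (U == L)) => [/eqP -> | UL]; case: (boolP (W == L)) => [/eqP -> | WL] //.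
  + by rewrite subxx.
  + by move=> _ /I2 ->.
  + by move=> /I2 -> _; rewrite orbT.
  + exact: I1.
- move=> U; rewrite /ps'; case: (boolP (U == L)) => [/eqP -> | UL] // /I2.
  exact: subset_trans L'L.
- move=> d [dp dle dc].
  case: (boolP (~: Hps ps' == L)) => [/eqP L'eq | L'ne].
    exfalso.
    have ok2 : okd ps (d0 + d).
      split; first by rewrite addr_gt0.
      by move: dle; rewrite N'; lra.
      move: dc; rewrite L'eq.
      have -> : (fun x => Vpsi vstar ps' x + d * vstar L x) =
                (fun x => Vpsi vstar ps x + (d0 + d) * vstar L x).
        by apply: boolp.funext => x; rewrite Vps' mulrDl addrA.
      by [].
    have := dmax (d0 + d) ok2; rewrite gerDl leNgt dp //.
  rewrite /ps' (negbTE L'ne).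
  apply/eqP; apply/negP => /negP nz.
  have := I2 _ nz => LL'.
  by move: L'ne; rewrite eqEsubset L'L LL'.
Qed.
End Inv.
Theorem lemma4p12 (R : realType) (V D : finType) (E : {set {set V}})
  (rel : {set V} -> {set {ffun V -> option D}})
  (sigma : {set V} -> {set V} -> R) (n p : nat) (Delta : R)
  (vstar : {set V} -> V -> R) (psi : {set V} -> R) :
  (* V is the union of the schemas *)
  (forall x : V, exists2 e, e \in E & x \in e) ->
  (* relation data and input size *)
  (forall e, e \in E -> well_typed e (rel e)) ->
  n = (\sum_(e in E) #|rel e|)%N ->
  (0 < p)%N ->
  (* Sigma-uniformized *)
  (forall e, e \in E -> forall U : {set V}, U \subset e -> 0 <= sigma e U) ->
  (forall e, e \in E -> satisfies e (rel e) (sigma e)) ->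
  0 < Delta ->
  (* fixed minimum fractional vertex covers v*_U of red(H[U]) *)
  (forall U : {set V}, is_min_fvc_red E U (vstar U)) ->
  construct_returns E n p sigma Delta vstar psi ->
  forall e, e \in E ->
    e :\: Hv E n p sigma (scale_div (Vpsi vstar psi) Delta) != set0 ->
    exists2 e', e' \in E &
      (e :\: Hv E n p sigma (scale_div (Vpsi vstar psi) Delta) \subset e') /\
      1 <= \sum_(x in e') Vpsi vstar psi x.
Proof.
move=> _ _ _ p0 _ _ D0 vmin [reach nloop] e eE ne.
have vs0 : forall U x, 0 <= vstar U x.
  by move=> U x; case: (vmin U) => [[h _] _ _]; apply: h.
have [I0 I1 I2 I3] := @Inv_reach R V E sigma n p Delta vstar p0 D0 vs0 psi reach.
set H := Hv E n p sigma (scale_div (Vpsi vstar psi) Delta) in ne I2 *.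
have N1 : 1 <= norm1 psi.
  rewrite leNgt; apply/negP => lt; apply: nloop; split => //.
  apply/eqP => HT; move: ne; by rewrite /H HT setDT eqxx.
have chC : forall U W, U \in [set U | psi U != 0] -> W \in [set U | psi U != 0] ->
    (U \subset W) || (W \subset U).
  by move=> U W; rewrite !inE; apply: I1.
have SC : forall U, U \in [set U | psi U != 0] -> e :\: H \subset U.
  move=> U; rewrite inE => /I2; apply: subset_trans.
  by rewrite setDE subsetIr.
have [g gE [Sg gred]] := @chain_pick V E (e :\: H) e ne eE (subsetDl e H) _ _ (erefl #|[set U | psi U != 0]|) chC SC.
exists g => //; split => //.
apply: le_trans N1 _.
rewrite /Vpsi exchange_big /norm1 /=; apply: ler_sum => U _.
rewrite -mulr_sumr.
case: (boolP (psi U == 0)) => [/eqP -> | nz]; first by rewrite mul0r.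
apply: ler_peMr => //.
have UC : U \in [set U | psi U != 0] by rewrite inE.
case: (vmin U) => [[_ cov] out _].
have := cov _ (gred U UC).
suff -> : \sum_(x in g) vstar U x = \sum_(x in U :&: g) vstar U x by [].
rewrite (bigID (fun x => x \in U)) /= [X in _ + X]big1 ?addr0.
  by apply: eq_bigl => x; rewrite inE andbC.
by move=> x /andP [_ /negbTE xU]; apply: out; rewrite xU.
Qed.
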